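(* Let $d\in\mathbb{N}$, $\alpha\in[0,1)$, $\delta>0$, $\lambda>0$, $\eta\in\mathbb{R}^{d}$, and let $\rho\in\mathbb{R}^{d\times d}$ be a symmetric positive definite matrix. For $x,y\in\mathbb{R}^d$ put $\langle x,y\rangle_\rho=x^{\top}\rho^{-1}y$ and $\|x\|_\rho=\sqrt{\langle x,x\rangle_\rho}$, and set $c_1=\sqrt{\|\eta\|_\rho^{2}+2\lambda}$. Consider the (Normal Tempered Stable) L\'evy density on $\mathbb{R}^d_*=\mathbb{R}^d\setminus\{0\}$ \[ \ell(z)=2\delta\sqrt{\frac{c_1^{\,2\alpha+d}}{(2\pi)^{d}\det[\rho]}}\;\frac{K_{\alpha+\frac{d}{2}}\!\left(c_1\|z\|_\rho\right)}{\|z\|_\rho^{\alpha+\frac{d}{2}}}\;e^{\langle\eta,z\rangle_\rho},\qquad z\in\mathbb{R}^d_*, \] where $K_\nu(\tau)=\frac12\int_0^\infty y^{\nu-1}e^{-\frac12\tau(y+y^{-1})}\,dy$ ($\tau>0$) is the modified Bessel function of the second kind. Define \[ A_\ell=2\alpha,\qquad B_\ell=\sqrt{\|\eta\|_\rho^{2}+2\lambda}-\|\eta\|_\rho,\qquad C_\ell(h)=\frac{2^{\alpha}\delta\,\Gamma\!\left(\alpha+\frac d2\right)}{\sqrt{\pi^{d}\det[\rho]}}\,e^{h\|\eta\|_\rho}\quad(h>0). \] Then for every $h>0$ and every $z\in\mathbb{R}^d_*$ with $\|z\|_\rho\in(0,h]$ one has $\ell(z)\le C_\ell(h)\,\|z\|_\rho^{-A_\ell-d}$,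 and $\ell(z)=O\!\left(e^{-B_\ell\|z\|_\rho}\right)$ as $\|z\|_\rho\to\infty$.
   Context: The density $\ell$ is the L\'evy measure of the $d$-dimensional Normal Tempered Stable process $L(t)=B(G(t))-\mathbb{E}[B(G(t))]$, where $B(t)=\eta t+\sqrt{\rho}\,W(t)$ with $W$ a standard $d$-dimensional Wiener process and $G$ an independent tempered stable subordinator with L\'evy density $\mathbb{I}_{x>0}\,\delta e^{-\lambda x}x^{-1-\alpha}$. $\Gamma$ denotes the Gamma function. *)

(* Defs.v *)
From HB Require Import structures.
From mathcomp Require Import all_boot all_order all_algebra.
From mathcomp Require Import all_classical all_reals all_analysis.
Set Implicit Arguments. Unset Strict Implicit. Unset Printing Implicit Defensive.
Import Order.TTheory GRing.Theory Num.Theory.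
Import numFieldNormedType.Exports.
Local Open Scope classical_set_scope.
Local Open Scope ring_scope.

Section NTS.
Variable R : realType.

Definition int_pos (f : R -> R) : R :=
  fine (\int[@lebesgue_measure R]_(y in [set y : R | (0 < y)%R]) (f y)%:E)%E.

Definition Gammaf (s : R) : R :=
  int_pos (fun t => powR t (s - 1) * expR (- t)).

Definition besselK (nu tau : R) : R :=
  2^-1 * int_pos (fun y => powR y (nu - 1) * expR (- (tau * (y + y^-1)) / 2)).

Definition ip_rho (d : nat) (rho : 'M[R]_d) (x y : 'cV[R]_d) : R :=
  (x^T *m invmx rho *m y) 0 0.
Definition norm_rho (d : nat) (rho : 'M[R]_d) (x : 'cV[R]_d) : R :=
  Num.sqrt (ip_rho rho x x).

Definition sym_posdef (d : nat) (rho : 'M[R]_d) : Prop :=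
  rho^T = rho /\ forall x : 'cV[R]_d, x != 0 -> 0 < (x^T *m rho *m x) 0 0.

Definition c1_NTS (d : nat) (rho : 'M[R]_d) (eta : 'cV[R]_d) (lambda : R) : R :=
  Num.sqrt (norm_rho rho eta ^+ 2 + 2 * lambda).

Definition ell_NTS (d : nat) (alpha delta lambda : R) (eta : 'cV[R]_d)
  (rho : 'M[R]_d) (z : 'cV[R]_d) : R :=
  let c1 := c1_NTS rho eta lambda in
  let nu := alpha + d%:R / 2 in
  2 * delta * Num.sqrt (powR c1 (2 * alpha + d%:R) /
                        ((2 * pi) ^+ d * \det rho))
    * (besselK nu (c1 * norm_rho rho z) / powR (norm_rho rho z) nu)
    * expR (ip_rho rho eta z).

Definition A_NTS (alpha : R) : R := 2 * alpha.
Definition B_NTS (d : nat) (rho : 'M[R]_d) (eta : 'cV[R]_d) (lambda : R) : R :=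
  Num.sqrt (norm_rho rho eta ^+ 2 + 2 * lambda) - norm_rho rho eta.
Definition C_NTS (d : nat) (alpha delta : R) (eta : 'cV[R]_d) (rho : 'M[R]_d)
  (h : R) : R :=
  powR 2 alpha * delta * Gammaf (alpha + d%:R / 2)
    / Num.sqrt (pi ^+ d * \det rho) * expR (h * norm_rho rho eta).

End NTS.

(* Main.v *)
Require Import Defs.
From HB Require Import structures.
From mathcomp Require Import all_boot all_order all_algebra.
From mathcomp Require Import all_classical all_reals all_analysis.
From mathcomp Require Import measurable_realfun.
From mathcomp Require Import ring lra.
Import Order.TTheory GRing.Theory Num.Theory.
Import numFieldNormedType.Exports.
Local Open Scope ring_scope.

Section S.
Set Implicit Arguments. Unset Strict Implicit.
Local Open Scope classical_set_scope.
Variable R : realType.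
Local Notation mu := (@lebesgue_measure R).

Lemma powR_der (p : R) (x : R) : 0 < x -> derivable (fun y : R => powR y p) x 1.
Proof. by move=> x0; apply: derivable_powR; rewrite in_itv/= andbT. Qed.

Lemma powR_cont (p : R) (x : R) : 0 < x -> {for x, continuous (fun y : R => powR y p)}.
Proof. by move=> x0; apply: differentiable_continuous; apply/derivable1_diffP; exact: powR_der. Qed.

Lemma powF_der (nu x : R) : 0 < x -> derivable (fun y => powR y nu * nu^-1) x 1.
Proof. by move=> x0; apply: derivableM; [exact: powR_der|exact: derivable_cst]. Qed.

Lemma powF_cont (nu x : R) : 0 < x -> {for x, continuous (fun y => powR y nu * nu^-1)}.
Proof. by move=> x0; apply: differentiable_continuous; apply/derivable1_diffP; exact: powF_der. Qed.

Lemma int_pow_seg (nu a b : R) : 0 < nu -> 0 < a -> a < b ->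
  (\int[mu]_(x in `[a, b]) (powR x (nu - 1))%:E =
    (powR b nu * nu^-1)%:E - (powR a nu * nu^-1)%:E)%E.
Proof.
move=> nu0 a0 ab.
apply: (@continuous_FTC2 _ _ (fun y => powR y nu * nu^-1)) => //.
- apply: continuous_in_subspaceT => x; rewrite inE /= in_itv /= => /andP[ax _].
  exact: powR_cont (lt_le_trans a0 ax).
- split.
  + move=> x; rewrite in_itv /= => /andP[ax _]; exact: powF_der (lt_trans a0 ax).
  + by apply: cvg_at_right_filter; exact: powF_cont.
  + by apply: cvg_at_left_filter; exact: powF_cont (lt_trans a0 ab).
- move=> x; rewrite in_itv /= => /andP[ax _].
  have x0 := lt_trans a0 ax.
  rewrite derive1Mr; last exact: powR_der.
  by rewrite powR_derive1 ?in_itv /= ?andbT // mulrC mulrA mulVf ?gt_eqF // mul1r.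
Qed.


Lemma inv_nat_le (n m : nat) : (n <= m)%N -> (m.+2%:R : R)^-1 <= (n.+2%:R)^-1.
Proof.
move=> nm; rewrite ler_pV2 ?inE ?unitfE ?ltr0n ?andbT // ?pnatr_eq0 //.
by rewrite ler_nat ltnS ltnS.
Qed.

Lemma gam_A (nu : R) : 0 < nu ->
  (\int[mu]_(x in `]0%R, 1%R]) (powR x (nu - 1))%:E <= (nu^-1)%:E)%E.
Proof.
move=> nu0.
pose F := fun n : nat => `[(n.+2%:R : R)^-1, 1]%classic.
have Feq : `]0, 1]%classic = \bigcup_n F n.
  apply/seteqP; split => x /=.
    rewrite in_itv /= => /andP[x0 x1].
    have [k] := ltr_add_invr x0; rewrite add0r => kx.
    exists k => //; rewrite /F /= in_itv /= x1 andbT.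
    apply: le_trans (ltW kx); rewrite ler_pV2 ?inE ?unitfE ?ltr0n ?andbT ?pnatr_eq0 //.
    by rewrite ler_nat.
  move=> [n _]; rewrite /F /= !in_itv /= => /andP[nx ->]; rewrite andbT.
  by apply: lt_le_trans nx; rewrite invr_gt0 ltr0n.
have nx n x : F n x -> 0 < x.
  by rewrite /F /= in_itv /= => /andP[+ _]; apply: lt_le_trans; rewrite invr_gt0 ltr0n.
have ndF : nondecreasing_seq F.
  move=> n m nm; rewrite subsetEset => x; rewrite /F /= !in_itv /= => /andP[nx' ->]; rewrite andbT.
  exact: le_trans (inv_nat_le nm) nx'.
have mF : forall i, measurable (F i) by move=> i; exact: measurable_itv.
have mf : forall i, measurable_fun (F i) (fun x => (powR x (nu - 1))%:E).
  by move=> i; apply/measurable_EFinP; apply: measurable_funTS; exact: measurable_powR.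
have f0 : forall i x, F i x -> (0 <= (powR x (nu - 1))%:E)%E.
  by move=> i x _; rewrite lee_fin powR_ge0.
have := ge0_nondecreasing_set_cvg_integral (mu:=mu) ndF mF mf f0.
rewrite -Feq => /cvg_lim => <- //.
apply: lime_le.
  apply: ereal_nondecreasing_is_cvgn => n m nm; apply: ge0_subset_integral => //.
  - exact: measurable_itv.
  - exact: measurable_itv.
  - by apply/measurable_EFinP; apply: measurable_funTS; exact: measurable_powR.
  - by move=> x _; rewrite lee_fin powR_ge0.
  - by have := ndF _ _ nm; rewrite subsetEset.
apply: nearW => n.
rewrite /F int_pow_seg //; last first.
  by rewrite invf_lt1 ?ltr0n // ltr1n.
rewrite powR1 mul1r -EFinB lee_fin gerBl.
by rewrite mulr_ge0 ?powR_ge0 ?invr_ge0 ?ltW.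
Qed.

Definition gfun (nu x : R) := powR x (nu - 1) * expR (- x).

Lemma measurable_gfun nu : measurable_fun setT (gfun nu).
Proof.
apply: measurable_funM; first exact: measurable_powR.
by apply: measurableT_comp; [exact: measurable_expR|exact: measurable_funN].
Qed.

Lemma gfun_ge0 nu x : 0 <= gfun nu x.
Proof. by rewrite /gfun mulr_ge0 ?powR_ge0 ?expR_ge0. Qed.

Lemma gfun_bound (nu x : R) : 1 <= x ->
  gfun nu x <= 2 * expR ((`|nu - 1| + 1) * ln (4 * (`|nu - 1| + 1))) * exponential_pdf (2^-1) x.
Proof.
move=> x1; set q := `|nu - 1| + 1.
have x0 : 0 < x by apply: lt_le_trans x1.
have q0 : 0 < q by rewrite /q ltr_pwDr.
rewrite exponential_pdfE ?(ltW x0) //= /gfun.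
have h1 : powR x (nu - 1) <= expR (q * ln x).
  rewrite [X in _ <= X](_ : _ = powR x q); last by rewrite /powR gt_eqF.
  apply: ler_powR => //; rewrite /q.
  by apply: le_trans (ler_norm _) _; rewrite lerDl.
have h2 : q * ln x <= x / 4 + q * ln (4 * q).
  have -> : ln x = ln (x / (4 * q)) + ln (4 * q).
    rewrite -lnM ?posrE ?divr_gt0 ?mulr_gt0 // divfK // mulf_neq0 // ?gt_eqF //.
  rewrite mulrDr lerD2r.
  have := ln_sublinear (x := x / (4 * q)) (divr_gt0 x0 (mulr_gt0 (ltr0n _ 4) q0)).
  move=> /ltW h; rewrite -(ler_pM2l q0) in h; apply: le_trans h _.
  rewrite [leLHS](_ : _ = x / 4) //; field; exact: lt0r_neq0.
apply: le_trans (ler_wpM2r (expR_ge0 _) h1) _.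
rewrite -expRD.
rewrite [leRHS](_ : _ = expR (q * ln (4 * q)) * expR (- 2^-1 * x)); last by field.
rewrite -expRD ler_expR.
have : x = x / 2 + x / 4 + x / 4 by field.
have : 0 <= x / 4 by rewrite divr_ge0 // ltW.
move: h2; set L := q * ln x; set K := q * ln (4 * q).
have -> : - 2^-1 * x = - (x / 2) by rewrite mulNr mulrC.
move: (x / 2) (x / 4) => a b; lra.
Qed.

Lemma gam_B (nu : R) :
  (\int[mu]_(x in `]1%R, +oo[) (gfun nu x)%:E < +oo)%E.
Proof.
set q := `|nu - 1| + 1.
set C := 2 * expR (q * ln (4 * q)).
have C0 : 0 <= C by rewrite /C mulr_ge0 ?expR_ge0.
apply: (@le_lt_trans _ _ (\int[mu]_(x in `]1%R, +oo[) (C * exponential_pdf (2^-1) x)%:E)%E).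
  apply: ge0_le_integral => //.
  - by move=> x _; rewrite lee_fin gfun_ge0.
  - by apply/measurable_EFinP; apply: measurable_funTS; exact: measurable_gfun.
  - apply/measurable_EFinP; apply: measurable_funTS; apply: measurable_funM => //.
    exact: measurable_exponential_pdf.
  - move=> x; rewrite /= in_itv /= andbT => x1; rewrite lee_fin.
    exact: gfun_bound (ltW x1).
apply: (@le_lt_trans _ _ (\int[mu]_(x in setT) (C * exponential_pdf (2^-1) x)%:E)%E).
  apply: ge0_subset_integral => //.
  - apply/measurable_EFinP; apply: measurable_funM => //.
    exact: measurable_exponential_pdf.
  - by move=> x _; rewrite lee_fin mulr_ge0 // exponential_pdf_ge0.
under eq_integral do rewrite EFinM.
rewrite ge0_integralZl_EFin //; last 2 first.
- by move=> x _; rewrite lee_fin exponential_pdf_ge0.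
- by apply/measurable_EFinP; exact: measurable_exponential_pdf.
by rewrite integral_exponential_pdf // mule1 ltry.
Qed.

Lemma preimage_scale_itv (c a b : R) : 0 < c ->
  ( *%R c) @^-1` `]a, b]%classic = `]a / c, b / c]%classic.
Proof.
move=> c0; apply/seteqP; split => x /=; rewrite !in_itv /=.
  by move=> /andP[ax xb]; rewrite ltr_pdivrMr // ler_pdivlMr // [x * c]mulrC ax xb.
by move=> /andP[]; rewrite ltr_pdivrMr // ler_pdivlMr // ![_ * c]mulrC => -> ->.
Qed.

Lemma lebesgue_scale (c : R) (c0 : 0 < c) (A : set R) : measurable A ->
  mu A = (c%:E * pushforward mu ( *%R c : R -> measurableTypeR R) A)%E.
Proof.
move=> mA.
have -> : (c%:E * pushforward mu ( *%R c : R -> measurableTypeR R) A)%E = mscale (NngNum (ltW c0)) (pushforward mu ( *%R c : R -> measurableTypeR R)) A by [].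
apply: lebesgue_measure_unique => //= _ [[a b]] _ <-.
rewrite /mscale/= /pushforward preimage_scale_itv // !lebesgue_measure_itv/=.
rewrite !lte_fin ltr_pM2r ?invr_gt0 //.
case: ifPn => ab; last by rewrite mule0.
by rewrite -EFinB -EFinM; congr EFin; rewrite -mulrBl mulrCA divff ?mulr1 // gt_eqF.
Qed.


Definition Pos : set R := [set x : R | 0 < x].
Lemma PosE : Pos = `]0, +oo[%classic.
Proof. by apply/seteqP; split => x /=; rewrite in_itv/= andbT. Qed.
Lemma measurable_Pos : measurable Pos.
Proof. by rewrite PosE. Qed.

Lemma integral_scale (c : R) (c0 : 0 < c) (f : R -> R) :
  measurable_fun setT f -> (forall x, 0 < x -> 0 <= f x) ->
  (\int[mu]_(x in Pos) (f (c * x))%:E = (c^-1)%:E * \int[mu]_(x in Pos) (f x)%:E)%E.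
Proof.
move=> mf f0.
have preP : ( *%R c) @^-1` Pos = Pos.
  by apply/seteqP; split => x /=; rewrite /Pos /= pmulr_rgt0.
rewrite [in RHS](eq_measure_integral (mscale (NngNum (ltW c0)) (pushforward mu ( *%R c : R -> measurableTypeR R)))); last first.
  by move=> A mA _; rewrite /mscale /= (lebesgue_scale c0).
rewrite [in RHS]ge0_integral_mscale //=; last 2 first.
- exact: measurable_Pos.
- by apply/measurable_EFinP; apply: measurable_funTS.
rewrite [in RHS]ge0_integral_pushforward //=; last 3 first.
- exact: measurable_Pos.
- by apply/measurable_EFinP; apply: measurable_funTS.
- by move=> x; rewrite inE => x0; rewrite lee_fin; exact: f0.
rewrite preP muleA -EFinM mulVf ?gt_eqF // mul1e.
by [].
Qed.


Lemma gam_fin (nu : R) : 0 < nu ->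
  (\int[mu]_(x in Pos) (gfun nu x)%:E < +oo)%E.
Proof.
move=> nu0.
have -> : Pos = `]0%R, 1%R]%classic `|` `]1%R, +oo[%classic.
  apply/seteqP; split => x /=.
    rewrite /Pos /= => x0; case: (leP x 1) => x1; [left|right]; rewrite /= in_itv /= ?x0 ?x1 //.
  rewrite /Pos /=; case; rewrite /= in_itv /= ?andbT; first by case/andP.
  exact: lt_trans.
rewrite ge0_integral_setU //; last 3 first.
- by apply/measurable_EFinP; apply: measurable_funTS; exact: measurable_gfun.
- by move=> x _; rewrite lee_fin gfun_ge0.
- apply/disj_setPS => x [] /=; rewrite !in_itv /= andbT => /andP[_ x1] /(le_lt_trans x1).
  by rewrite ltxx.
apply: lte_add_pinfty; last exact: gam_B.
apply: (le_lt_trans _ (ltry _)); apply: le_trans (gam_A nu0).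
apply: ge0_le_integral => //.
- by move=> x _; rewrite lee_fin gfun_ge0.
- by apply/measurable_EFinP; apply: measurable_funTS; exact: measurable_gfun.
- by apply/measurable_EFinP; apply: measurable_funTS; exact: measurable_powR.
- move=> x; rewrite /= in_itv /= => /andP[x0 _]; rewrite lee_fin /gfun.
  rewrite ler_piMr ?powR_ge0 // expR_le1 oppr_le0 ltW //.
Qed.

Definition Gam (nu : R) : R := fine (\int[mu]_(x in Pos) (gfun nu x)%:E).

Lemma GamE (nu : R) : 0 < nu -> (\int[mu]_(x in Pos) (gfun nu x)%:E)%E = (Gam nu)%:E.
Proof.
move=> nu0; rewrite /Gam fineK // ge0_fin_numE ?gam_fin //.
by apply: integral_ge0 => x _; rewrite lee_fin gfun_ge0.
Qed.

Lemma Gam_ge0 (nu : R) : 0 <= Gam nu.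
Proof. by rewrite /Gam fine_ge0 // integral_ge0 // => x _; rewrite lee_fin gfun_ge0. Qed.

Lemma gam_scale (nu c : R) : 0 < nu -> 0 < c ->
  (\int[mu]_(x in Pos) (powR x (nu - 1) * expR (- (c * x)))%:E)%E =
  (powR c (- nu) * Gam nu)%:E.
Proof.
move=> nu0 c0.
have p0 : 0 < powR c (nu - 1) by rewrite powR_gt0.
transitivity (\int[mu]_(x in Pos) ((powR c (nu - 1))^-1%:E * (gfun nu (c * x))%:E))%E.
  apply: eq_integral => x; rewrite inE /Pos /= => x0.
  rewrite -EFinM; congr EFin; rewrite /gfun powRM ?(ltW c0) ?(ltW x0) //.
  by field; exact: lt0r_neq0.
rewrite ge0_integralZl_EFin //; last 4 first.
- exact: measurable_Pos.
- by move=> x _; rewrite lee_fin gfun_ge0.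
- apply/measurable_EFinP; apply: measurable_funTS.
  by apply: measurableT_comp; [exact: measurable_gfun|].
- by rewrite invr_ge0 ltW.
rewrite integral_scale //; last 2 first.
- exact: measurable_gfun.
- by move=> x _; exact: gfun_ge0.
rewrite GamE // muleA -!EFinM; congr EFin; congr (_ * _).
have e : powR c (- nu) = c^-1 / powR c (nu - 1).
  rewrite -powR_inv1 ?(ltW c0) // -powRB ?(gt_eqF c0) ?implybT //.
  by congr powR; ring.
by rewrite e mulrC.
Qed.


Definition bk (nu tau y : R) := powR y (nu - 1) * expR (- (tau * (y + y^-1)) / 2).

Lemma measurable_bk (nu tau : R) : measurable_fun Pos (bk nu tau).
Proof.
apply: (eq_measurable_fun (fun y => powR y (nu - 1) * expR (- (tau * (y + powR y (-1))) / 2))).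
  by move=> y; rewrite inE /Pos /= => y0; rewrite /bk powR_inv1 // ltW.
apply: measurable_funTS; apply: measurable_funM; first exact: measurable_powR.
apply: measurableT_comp; first exact: measurable_expR.
apply: measurable_funM => //; apply: measurableT_comp => //.
apply: measurable_funM => //; apply: measurable_funD => //; exact: measurable_powR.
Qed.

Lemma bk_ge0 nu tau y : 0 <= bk nu tau y.
Proof. by rewrite /bk mulr_ge0 ?powR_ge0 ?expR_ge0. Qed.

Lemma besselK_ge0 (nu tau : R) : 0 <= besselK nu tau.
Proof.
rewrite /besselK /int_pos mulr_ge0 ?invr_ge0 ?ler0n // fine_ge0 //.
by apply: integral_ge0 => y _; rewrite lee_fin; exact: bk_ge0.
Qed.

Lemma besselK_le (nu tau c e0 : R) : 0 < nu -> 0 < c -> 0 <= e0 ->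
  (forall y, 0 < y -> bk nu tau y <= e0 * (powR y (nu - 1) * expR (- (c * y)))) ->
  besselK nu tau <= 2^-1 * (e0 * (powR c (- nu) * Gam nu)).
Proof.
move=> nu0 c0 e00 hb.
rewrite /besselK /int_pos; apply: ler_wpM2l; first by rewrite invr_ge0 ler0n.
set J := (\int[mu]_(y in _) _)%E.
have I0 : (0 <= J)%E by apply: integral_ge0 => y _; rewrite lee_fin; exact: bk_ge0.
have Ile : (J <= (e0 * (powR c (- nu) * Gam nu))%:E)%E.
  rewrite EFinM -gam_scale // -ge0_integralZl_EFin //; last 3 first.
  - exact: measurable_Pos.
  - by move=> y y0; rewrite lee_fin mulr_ge0 ?powR_ge0 ?expR_ge0.
  - apply/measurable_EFinP; apply: measurable_funTS; apply: measurable_funM.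
      exact: measurable_powR.
    by apply: measurableT_comp; [exact: measurable_expR|apply: measurableT_comp].
  apply: ge0_le_integral.
  - exact: measurable_Pos.
  - by move=> y _; rewrite lee_fin; exact: bk_ge0.
  - by apply/measurable_EFinP; exact: measurable_bk.
  - apply/measurable_EFinP; apply: measurable_funTS; apply: measurable_funM => //.
    apply: measurable_funM; first exact: measurable_powR.
    by apply: measurableT_comp; [exact: measurable_expR|apply: measurableT_comp].
  by move=> y y0; rewrite -EFinM lee_fin; exact: hb.
have If : J \is a fin_num.
  by rewrite ge0_fin_numE //; apply: le_lt_trans Ile _; exact: ltry.
by move: Ile; rewrite -(fineK If) lee_fin.
Qed.

Lemma K1 (nu tau : R) : 0 < nu -> 0 < tau ->
  besselK nu tau <= 2^-1 * (powR (tau / 2) (- nu) * Gam nu).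
Proof.
move=> nu0 t0.
rewrite -[X in 2^-1 * X]mul1r; apply: besselK_le => //.
  by rewrite divr_gt0.
move=> y y0; rewrite mul1r /bk; apply: ler_wpM2l; first exact: powR_ge0.
rewrite ler_expR.
rewrite mulrDr.
have : 0 <= tau * y^-1 by rewrite mulr_ge0 // ?invr_ge0 ltW.
move: (tau * y^-1) => u hu.
nra.
Qed.

Lemma K2 (nu tau : R) : 0 < nu -> 1 <= tau ->
  besselK nu tau <= 2^-1 * (expR (1 - tau) * (powR (2^-1) (- nu) * Gam nu)).
Proof.
move=> nu0 t1.
apply: besselK_le => //.
move=> y y0; rewrite /bk mulrCA; apply: ler_wpM2l; first exact: powR_ge0.
rewrite -expRD ler_expR.
have u0 : 0 < y^-1 by rewrite invr_gt0.
have e : y + y^-1 - 2 = (y - 1) ^+ 2 / y by field; exact: lt0r_neq0.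
have h1 : 0 <= y + y^-1 - 2 by rewrite e divr_ge0 ?sqr_ge0 // ltW.
have h2 : 0 <= (tau - 1) * (y + y^-1 - 2) by rewrite mulr_ge0 // subr_ge0.
move: h1 h2 (ltW u0); move: (y^-1) => u h1 h2 hu.
nra.
Qed.

End S.

Section LA.
Set Implicit Arguments. Unset Strict Implicit.
Variable R : realType.
Variable d : nat.
Variable rho : 'M[R]_d.
Hypothesis hrho : sym_posdef rho.

Lemma rho_unit : rho \in unitmx.
Proof.
case: hrho => _ pd.
rewrite unitmxE unitfE; apply/negP => /det0P [v v0 vr].
have : v^T != 0 by apply: contra v0 => /eqP h; rewrite -[v]trmxK h trmx0.
move=> /pd; rewrite trmxK vr mul0mx mxE ltxx //.
Qed.

Local Notation S := (invmx rho).

Lemma S_sym : S^T = S.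
Proof. by case: hrho => hs _; rewrite trmx_inv hs. Qed.

Lemma ip_pos (x : 'cV[R]_d) : x != 0 -> 0 < ip_rho rho x x.
Proof.
move=> x0; case: hrho => hs pd.
set y := S *m x.
have xy : x = rho *m y by rewrite /y mulKVmx // rho_unit.
have y0 : y != 0 by apply: contra x0 => /eqP h; rewrite xy h mulmx0.
rewrite /ip_rho xy trmx_mul hs -!mulmxA (mulmxA S) mulVmx ?rho_unit // mul1mx mulmxA.
exact: pd.
Qed.

Lemma ip_sym (x y : 'cV[R]_d) : ip_rho rho x y = ip_rho rho y x.
Proof.
rewrite /ip_rho.
have -> : (y^T *m S *m x) = (x^T *m S *m y)^T by rewrite !trmx_mul trmxK S_sym mulmxA.
by rewrite [RHS]mxE.
Qed.

Lemma ip_subl (x y z : 'cV[R]_d) : ip_rho rho (x - y) z = ip_rho rho x z - ip_rho rho y z.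
Proof. by rewrite /ip_rho (raddfB (@trmx R d 1)) !mulmxBl !mxE. Qed.

Lemma ip_scalel (t : R) (x z : 'cV[R]_d) : ip_rho rho (t *: x) z = t * ip_rho rho x z.
Proof. by rewrite /ip_rho linearZ /= -!scalemxAl mxE. Qed.

Lemma ip_subr (x y z : 'cV[R]_d) : ip_rho rho z (x - y) = ip_rho rho z x - ip_rho rho z y.
Proof. by rewrite ip_sym ip_subl ![ip_rho _ x _]ip_sym ![ip_rho _ y _]ip_sym. Qed.

Lemma ip_scaler (t : R) (x z : 'cV[R]_d) : ip_rho rho z (t *: x) = t * ip_rho rho z x.
Proof. by rewrite ip_sym ip_scalel ip_sym. Qed.

Lemma ip_ge0 (x : 'cV[R]_d) : 0 <= ip_rho rho x x.
Proof.
have [->|x0] := eqVneq x 0; last exact/ltW/ip_pos.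
by rewrite /ip_rho trmx0 !mul0mx mxE.
Qed.

Lemma cauchy_schwarz (e z : 'cV[R]_d) : z != 0 ->
  ip_rho rho e z <= norm_rho rho e * norm_rho rho z.
Proof.
move=> z0.
set a := ip_rho rho e z; set qz := ip_rho rho z z; set qe := ip_rho rho e e.
have qz0 : 0 < qz by exact: ip_pos.
set t := a / qz.
have h := ip_ge0 (e - t *: z).
rewrite ip_subl !ip_subr !ip_scalel !ip_scaler (ip_sym z e) -/a -/qz -/qe in h.
have h2 : a ^+ 2 <= qe * qz.
  have e1 : (qe - t * a - (t * a - t * (t * qz))) * qz = qe * qz - a ^+ 2.
    by rewrite /t; field; exact: lt0r_neq0.
  have : 0 <= (qe - t * a - (t * a - t * (t * qz))) * qz by rewrite mulr_ge0 // ltW.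
  by rewrite e1 subr_ge0.
apply: le_trans (ler_norm a) _.
rewrite /norm_rho -/qe -/qz -sqrtrM ?ip_ge0 // -sqrtr_sqr ler_sqrt //.
by rewrite mulr_ge0 // ?ip_ge0 // ltW.
Qed.

Lemma norm_pos (z : 'cV[R]_d) : z != 0 -> 0 < norm_rho rho z.
Proof. by move=> z0; rewrite /norm_rho sqrtr_gt0 ip_pos. Qed.

End LA.

Lemma cV_dim0 (R : realType) k (w : 'cV[R]_k) : k = 0%N -> w = 0.
Proof. by move=> k0; subst k; apply/matrixP => -[]. Qed.


Lemma sqrtV_any (R : realType) (x : R) : Num.sqrt (x^-1) = (Num.sqrt x)^-1.
Proof.
have [x0|x0] := leP 0 x; first exact: sqrtrV.
rewrite !ler0_sqrtr ?invr0 //; first exact: ltW.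
by rewrite invr_le0 ltW.
Qed.

Lemma powR_half_inv (R : realType) (nu : R) : powR (2^-1) (- nu) = powR 2 nu.
Proof. by rewrite -powR_inv1 ?ler0n // -powRrM mulNr mul1r opprK. Qed.

Theorem mainTheorem1 (R : realType) (d : nat) (alpha delta lambda : R)
  (eta : 'cV[R]_d) (rho : 'M[R]_d) :
  0 <= alpha -> alpha < 1 -> 0 < delta -> 0 < lambda ->
  sym_posdef rho ->
  (forall h : R, 0 < h -> forall z : 'cV[R]_d, z != 0 ->
     norm_rho rho z <= h ->
     ell_NTS alpha delta lambda eta rho z
       <= C_NTS alpha delta eta rho h
          * powR (norm_rho rho z) (- (A_NTS alpha + d%:R)))
  /\
  (exists M C : R, forall z : 'cV[R]_d, z != 0 ->
     M <= norm_rho rho z ->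
     `|ell_NTS alpha delta lambda eta rho z|
       <= C * expR (- (B_NTS rho eta lambda * norm_rho rho z))).
Proof.
move=> a0 a1 dl0 lam0 hrho.
set nu := alpha + d%:R / 2.
have nu0 : forall z : 'cV[R]_d, z != 0 -> 0 < nu.
  move=> z z0; have dpos : (0 < d)%N.
    case: (posnP d) => // /(cV_dim0 z) zz.
    by rewrite zz eqxx in z0.
  by rewrite /nu ltr_wpDl // divr_gt0 // ltr0n.
set ne := norm_rho rho eta.
have ne0 : 0 <= ne by exact: sqrtr_ge0.
set c1 := c1_NTS rho eta lambda.
have c10 : 0 < c1.
  by rewrite /c1 /c1_NTS sqrtr_gt0 ltr_wpDl ?sqr_ge0 // mulr_gt0.
set Sq := Num.sqrt (powR c1 (2 * alpha + d%:R) / ((2 * pi) ^+ d * \det rho)).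
have Sq0 : 0 <= Sq by exact: sqrtr_ge0.
have ellE : forall z, ell_NTS alpha delta lambda eta rho z =
    2 * delta * Sq * (besselK nu (c1 * norm_rho rho z) / powR (norm_rho rho z) nu)
    * expR (ip_rho rho eta z) by [].
have ipb : forall z, z != 0 -> ip_rho rho eta z <= ne * norm_rho rho z.
  by move=> z z0; exact: cauchy_schwarz.
have A0 : 0 <= 2 * delta * Sq by rewrite !mulr_ge0 // ltW.
have ell0 : forall z, 0 <= ell_NTS alpha delta lambda eta rho z.
  move=> z; rewrite ellE mulr_ge0 ?expR_ge0 // mulr_ge0 // divr_ge0 ?powR_ge0 //.
  exact: besselK_ge0.
split.
  move=> h h0 z z0 zh.
  set r := norm_rho rho z.
  have r0 : 0 < r by exact: norm_pos.
  have nu0' := nu0 z z0.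
  have Kb := K1 nu0' (mulr_gt0 c10 r0).
  have eb : expR (ip_rho rho eta z) <= expR (h * ne).
    rewrite ler_expR; apply: le_trans (ipb z z0) _.
    by rewrite mulrC ler_wpM2r.
  rewrite ellE; apply: (@le_trans _ _
    (2 * delta * Sq * (2^-1 * (powR (c1 * r / 2) (- nu) * Gam nu) / powR r nu) * expR (h * ne))).
    apply: ler_pM.
    - by rewrite mulr_ge0 // divr_ge0 ?powR_ge0 // besselK_ge0.
    - exact: expR_ge0.
    - by apply: ler_wpM2l => //; apply: ler_wpM2r => //; rewrite invr_ge0 powR_ge0.
    - exact: eb.
  rewrite le_eqVlt; apply/orP; left; apply/eqP.
  have F1 : powR (c1 * r / 2) (- nu) = (powR c1 nu)^-1 * powR r (- nu) * powR 2 nu.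
    by rewrite !powRM ?mulr_ge0 ?invr_ge0 ?ler0n ?ltW // powRN powR_half_inv.
  have F2 : powR r (- (A_NTS alpha + d%:R)) = powR r (- nu) * powR r (- nu).
    rewrite -powRD; last by rewrite (gt_eqF r0) implybT.
    by congr powR; rewrite /A_NTS /nu; field.
  have F3 : (powR r nu)^-1 = powR r (- nu) by rewrite powRN.
  have F4 : powR 2 nu = powR 2 alpha * powR 2 (d%:R / 2).
    by rewrite /nu powRD // pnatr_eq0 implybT.
  have S2 : Num.sqrt (2 ^+ d) = powR 2 (d%:R / 2 : R).
    by rewrite -powR12_sqrt ?exprn_ge0 ?ler0n // -powR_mulrn ?ler0n // -powRrM.
  have F5 : Sq = powR c1 nu * ((powR 2 (d%:R / 2))^-1 * (Num.sqrt (pi ^+ d * \det rho))^-1).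
    rewrite /Sq.
    have -> : 2 * alpha + d%:R = nu * 2 by rewrite /nu; field.
    rewrite powRrM powR_mulrn ?powR_ge0 // sqrtrM ?sqr_ge0 // sqrtr_sqr ger0_norm ?powR_ge0 //.
    rewrite exprMn -mulrA sqrtV_any sqrtrM ?exprn_ge0 ?ler0n //.
    by rewrite S2 invfM.
  have GG : Gammaf nu = Gam nu by [].
  rewrite /C_NTS -/nu GG F1 F2 F5 F4.
  have T0 : powR 2 (d%:R / 2 : R) != 0 by apply: lt0r_neq0; apply: powR_gt0.
  have P0 : powR c1 nu != 0 by apply: lt0r_neq0; apply: powR_gt0.
  have R0 : powR r nu != 0 by apply: lt0r_neq0; apply: powR_gt0.
  rewrite -F3 -/ne.
  move: (Num.sqrt (pi ^+ d * \det rho))^-1 => sp.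
  by field; rewrite R0 P0 T0.
set X := powR (2^-1) (- nu) * Gam nu.
exists (1 + c1^-1), (2 * delta * Sq * (2^-1 * X) * expR 1).
move=> z z0 Mz.
set r := norm_rho rho z.
have r0 : 0 < r by exact: norm_pos.
have nu0' := nu0 z z0.
have ci0 : 0 <= c1^-1 by rewrite invr_ge0 ltW.
have r1 : 1 <= r by apply: le_trans Mz; rewrite lerDl.
have t1 : 1 <= c1 * r.
  have : c1^-1 <= r by apply: le_trans Mz; rewrite lerDr.
  by move=> h; apply: le_trans (ler_wpM2l (ltW c10) h); rewrite mulfV // gt_eqF.
have Kb := K2 nu0' t1.
have X0 : 0 <= X by rewrite /X mulr_ge0 ?powR_ge0 ?Gam_ge0.
have pr1 : 1 <= powR r nu.
  by rewrite -(powRr0 r); apply: ler_powR => //; exact: ltW.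
have pr0 : 0 < powR r nu by apply: lt_le_trans pr1.
have eb : expR (ip_rho rho eta z) <= expR (ne * r).
  by rewrite ler_expR; exact: ipb.
rewrite ger0_norm // ellE.
apply: (@le_trans _ _
  (2 * delta * Sq * (2^-1 * (expR (1 - c1 * r) * X)) * expR (ne * r))).
  apply: ler_pM.
  - by rewrite mulr_ge0 // divr_ge0 ?powR_ge0 // besselK_ge0.
  - exact: expR_ge0.
  - apply: ler_wpM2l => //; apply: le_trans Kb.
    rewrite ler_pdivrMr // ler_peMr //; exact: besselK_ge0.
  - exact: eb.
rewrite le_eqVlt; apply/orP; left; apply/eqP.
have -> : B_NTS rho eta lambda = c1 - ne by [].
have e1 : expR (1 - c1 * r) * expR (ne * r) = expR 1 * expR (- ((c1 - ne) * r)).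
  by rewrite -!expRD; congr expR; ring.
transitivity (2 * delta * Sq * (2^-1 * X) * (expR (1 - c1 * r) * expR (ne * r))); first by ring.
by rewrite e1; ring.
Qed.
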